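(* For $m,n\in\mathbb Z$ and $r\ge0$ define $$b_{m,n}(r):=(\pi q^{-2})^{(n-r)\# r}\sum_{s=0}^{r-1}(\pi q^2)^{n-r+m(r-s-1)}q^{(m-n+r-1)(n-r+s+1)+(n-r)s}\begin{bmatrix} m+s\\ n-r+s+1\end{bmatrix}_{q,\pi}\begin{bmatrix} n-r+s\\ s\end{bmatrix}_{q,\pi},$$ $$c_{m,n}(r):=(\pi q^{-2})^{(n-r)\# r}q^{(m-n+r)n+(n-r)r}\begin{bmatrix} m+r\\ n\end{bmatrix}_{q,\pi}\begin{bmatrix} n\\ r\end{bmatrix}_{q,\pi}.$$ Then $c_{m,n}(r)=b_{m,n}(r)+b_{m,n}(r+1)$ for all $m,n\in\mathbb Z$ and $r\ge0$. In particular (taking $m=n-r$), for $0\le r\le n$, $$q^{(n-r)r}\begin{bmatrix} n\\ r\end{bmatrix}_{q,\pi}=\sum_{s=0}^r(\pi q^2)^{(n-r)(r-s)}q^{(n-r-1)s}\begin{bmatrix} n-r+s-1\\ s\end{bmatrix}_{q,\pi}.$$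
   Context: Work in $\mathbb Q(q)^\pi:=\mathbb Q(q)[\pi]/(\pi^2-1)$. For $n\in\mathbb Z$, $[n]_{q,\pi}:=\frac{(\pi q)^n-q^{-n}}{\pi q-q^{-1}}$, $[r]^!_{q,\pi}:=[r]_{q,\pi}\cdots[1]_{q,\pi}$, and for $n\in\mathbb Z$, $r\ge0$, $\begin{bmatrix} n\\ r\end{bmatrix}_{q,\pi}:=\frac{[n]_{q,\pi}\cdots[n-r+1]_{q,\pi}}{[r]^!_{q,\pi}}$, with $\begin{bmatrix} n\\ r\end{bmatrix}_{q,\pi}:=0$ if $r<0$. For $n\in\mathbb Z$, $r\ge 0$, $n\# r:=n+(n+1)+\cdots+(n+r-1)=nr+\binom r2$. *)

(* Defs.v *)
From HB Require Import structures.
From mathcomp Require Import all_boot all_order all_algebra.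
From mathcomp Require Import ring.
Set Implicit Arguments. Unset Strict Implicit. Unset Printing Implicit Defensive.
Import Order.TTheory GRing.Theory Num.Theory.
Local Open Scope ring_scope.

Definition Qq : fieldType := {fraction {poly rat}}.

(* Q(q)^pi := Q(q)[pi]/(pi^2 - 1): an element a + b*pi is stored as (a, b),
   using the Q(q)-basis {1, pi} of the quotient ring. *)
Record Qpi := QPi { qpi_re : Qq; qpi_im : Qq }.

Definition Qpi_to (x : Qpi) := (qpi_re x, qpi_im x).
Definition Qpi_of (p : Qq * Qq) := QPi p.1 p.2.
Lemma Qpi_toK : cancel Qpi_to Qpi_of. Proof. by case. Qed.
HB.instance Definition _ := Equality.copy Qpi (can_type Qpi_toK).
HB.instance Definition _ := Choice.copy Qpi (can_type Qpi_toK).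

Definition qpi0 := QPi 0 0.
Definition qpi1 := QPi 1 0.
Definition qpi_add x y := QPi (qpi_re x + qpi_re y) (qpi_im x + qpi_im y).
Definition qpi_opp x := QPi (- qpi_re x) (- qpi_im x).
(* (a + b pi)(c + d pi) = (ac + bd) + (ad + bc) pi, since pi^2 = 1 *)
Definition qpi_mul x y :=
  QPi (qpi_re x * qpi_re y + qpi_im x * qpi_im y)
      (qpi_re x * qpi_im y + qpi_im x * qpi_re y).

Lemma qpi_eq a b c d : a = c -> b = d -> QPi a b = QPi c d.
Proof. by move=> -> ->. Qed.

Fact qpi_addA : associative qpi_add.
Proof. by move=> [? ?] [? ?] [? ?]; apply: qpi_eq => /=; ring. Qed.
Fact qpi_addC : commutative qpi_add.
Proof. by move=> [? ?] [? ?]; apply: qpi_eq => /=; ring. Qed.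
Fact qpi_add0 : left_id qpi0 qpi_add.
Proof. by move=> [? ?]; apply: qpi_eq => /=; ring. Qed.
Fact qpi_addN : left_inverse qpi0 qpi_opp qpi_add.
Proof. by move=> [? ?]; apply: qpi_eq => /=; ring. Qed.
HB.instance Definition _ := GRing.isZmodule.Build Qpi
  qpi_addA qpi_addC qpi_add0 qpi_addN.

Fact qpi_mulA : associative qpi_mul.
Proof. by move=> [? ?] [? ?] [? ?]; apply: qpi_eq => /=; ring. Qed.
Fact qpi_mulC : commutative qpi_mul.
Proof. by move=> [? ?] [? ?]; apply: qpi_eq => /=; ring. Qed.
Fact qpi_mul1 : left_id qpi1 qpi_mul.
Proof. by move=> [? ?]; apply: qpi_eq => /=; ring. Qed.
Fact qpi_mulDl : left_distributive qpi_mul qpi_add.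
Proof. by move=> [? ?] [? ?] [? ?]; apply: qpi_eq => /=; ring. Qed.
Fact qpi_one_neq0 : qpi1 != qpi0.
Proof. by apply/eqP => -[]; apply/eqP; exact: oner_neq0. Qed.
HB.instance Definition _ := GRing.Zmodule_isComNzRing.Build Qpi
  qpi_mulA qpi_mulC qpi_mul1 qpi_mulDl qpi_one_neq0.

Definition qpi_unit : {pred Qpi} :=
  fun x => qpi_re x ^+ 2 - qpi_im x ^+ 2 != 0.
Definition qpi_inv (x : Qpi) : Qpi :=
  if x \in qpi_unit then
    QPi (qpi_re x / (qpi_re x ^+ 2 - qpi_im x ^+ 2))
        (- qpi_im x / (qpi_re x ^+ 2 - qpi_im x ^+ 2))
  else x.

Fact qpi_mulV : {in qpi_unit, left_inverse 1 qpi_inv *%R}.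
Proof.
move=> [a b] ux; rewrite /qpi_inv ux; rewrite unfold_in in ux.
change (QPi (a / (a ^+ 2 - b ^+ 2) * a + - b / (a ^+ 2 - b ^+ 2) * b)
            (a / (a ^+ 2 - b ^+ 2) * b + - b / (a ^+ 2 - b ^+ 2) * a) = QPi 1 0).
apply: qpi_eq.
  transitivity ((a ^+ 2 - b ^+ 2) * (a ^+ 2 - b ^+ 2)^-1); first by ring.
  by rewrite mulfV.
transitivity (0 * (a ^+ 2 - b ^+ 2)^-1); first by ring.
by rewrite mul0r.
Qed.
Fact qpi_unitPl x y : y * x = 1 -> x \in qpi_unit.
Proof.
case: x y => [a b] [c d].
change (QPi (c * a + d * b) (c * b + d * a) = QPi 1 0 -> a ^+ 2 - b ^+ 2 != 0).
case=> e1 e2; apply/eqP => h.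
have : (c ^+ 2 - d ^+ 2) * (a ^+ 2 - b ^+ 2) = 1.
  have -> : (c ^+ 2 - d ^+ 2) * (a ^+ 2 - b ^+ 2) =
    (c * a + d * b) ^+ 2 - (c * b + d * a) ^+ 2 by ring.
  by rewrite e1 e2; ring.
by rewrite h mulr0 => /eqP; rewrite eq_sym oner_eq0.
Qed.
Fact qpi_inv_out : {in [predC qpi_unit], qpi_inv =1 id}.
Proof. by move=> x; rewrite inE /qpi_inv => /negbTE ->. Qed.
HB.instance Definition _ := GRing.ComNzRing_hasMulInverse.Build Qpi
  qpi_mulV qpi_unitPl qpi_inv_out.

Definition q : Qpi := QPi (tofrac 'X) 0.
Definition Pi : Qpi := QPi 0 1.

Definition qint (n : int) : Qpi :=
  ((Pi * q) ^ n - q ^ (- n)) / (Pi * q - q^-1).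

Definition qfact (r : nat) : Qpi := \prod_(1 <= i < r.+1) qint i%:Z.

Definition qbinom (n r : int) : Qpi :=
  match r with
  | Posz k => (\prod_(i < k) qint (n - i%:Z)) / qfact k
  | Negz _ => 0
  end.

(* n # r = n + (n+1) + ... + (n+r-1) = n r + binom(r,2) *)
Definition sharp (n : int) (r : nat) : int := n * r%:Z + ('C(r, 2))%:Z.

Definition b_mn (m n : int) (r : nat) : Qpi :=
  (Pi * q ^ (-2)) ^ sharp (n - r%:Z) r *
  \sum_(s < r)
    (Pi * q ^+ 2) ^ (n - r%:Z + m * (r%:Z - s%:Z - 1)) *
    q ^ ((m - n + r%:Z - 1) * (n - r%:Z + s%:Z + 1) + (n - r%:Z) * s%:Z) *
    qbinom (m + s%:Z) (n - r%:Z + s%:Z + 1) *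
    qbinom (n - r%:Z + s%:Z) s%:Z.

Definition c_mn (m n : int) (r : nat) : Qpi :=
  (Pi * q ^ (-2)) ^ sharp (n - r%:Z) r *
  q ^ ((m - n + r%:Z) * n + (n - r%:Z) * r%:Z) *
  qbinom (m + r%:Z) n * qbinom n r%:Z.

(* Main.v *)
Require Import Defs.
From HB Require Import structures.
From mathcomp Require Import all_boot all_order all_algebra.
From mathcomp Require Import ring lra zify.
Import Order.TTheory GRing.Theory Num.Theory.
Local Open Scope ring_scope.

Lemma qpi_unitE (x : Qpi) : (x \is a GRing.unit) = (qpi_re x ^+ 2 - qpi_im x ^+ 2 != 0).
Proof. by []. Qed.

Lemma qpi_mulE (x y : Qpi) : x * y = QPi (qpi_re x * qpi_re y + qpi_im x * qpi_im y)
      (qpi_re x * qpi_im y + qpi_im x * qpi_re y).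
Proof. by []. Qed.

Definition Xq : Qq := tofrac 'X.
Definition phi (e : Qq) (x : Qpi) : Qq := qpi_re x + e * qpi_im x.

Section Phi.
Variable e : Qq.
Hypothesis he : e ^+ 2 = 1.

Lemma phiM x y : phi e (x * y) = phi e x * phi e y.
Proof.
case: x y => a b [c d]; rewrite /phi qpi_mulE /=.
transitivity (a*c + e*(a*d+b*c) + e^+2*(b*d)); last ring.
by rewrite he; ring.
Qed.

Lemma phi1 : phi e 1 = 1.
Proof. by rewrite /phi /= mulr0 addr0. Qed.

Lemma phiB x y : phi e (x - y) = phi e x - phi e y.
Proof. by case: x y => a b [c d]; rewrite /phi /=; ring. Qed.

Lemma phiPi : phi e Pi = e.
Proof. by rewrite /phi /= mulr1 add0r. Qed.

Lemma phiq : phi e q = Xq.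
Proof. by rewrite /phi /= mulr0 addr0. Qed.

Lemma phiX x k : phi e (x ^+ k) = phi e x ^+ k.
Proof. by elim: k => [|k IH]; rewrite ?phi1 // !exprS phiM IH. Qed.

Lemma phiV x : x \is a GRing.unit -> phi e (x^-1) = (phi e x)^-1.
Proof.
move=> ux; have h : phi e (x^-1) * phi e x = 1 by rewrite -phiM mulVr // phi1.
have nz : phi e x != 0.
  by apply/eqP => h0; move: h; rewrite h0 mulr0 => /eqP; rewrite eq_sym oner_eq0.
by apply: (mulIf nz); rewrite h mulVf.
Qed.
End Phi.

Lemma sq1 : (1 : Qq) ^+ 2 = 1. Proof. by rewrite expr1n. Qed.
Lemma sqm1 : (-1 : Qq) ^+ 2 = 1. Proof. rewrite sqrrN expr1n //. Qed.

Lemma unit_phi (x : Qpi) : phi 1 x != 0 -> phi (-1) x != 0 -> x \is a GRing.unit.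
Proof.
move=> h1 h2; rewrite qpi_unitE.
have -> : qpi_re x ^+ 2 - qpi_im x ^+ 2 = phi 1 x * phi (-1) x by rewrite /phi; ring.
exact: mulf_neq0 h1 h2.
Qed.

Lemma Xq_neq0 : Xq != 0.
Proof. by rewrite /Xq tofrac_eq0 polyX_eq0. Qed.

Lemma keyX (c : rat) (k : nat) : (0 < k)%N -> tofrac (c%:P) * Xq ^+ k != 1.
Proof.
move=> k0; rewrite /Xq -tofracXn -tofracM -tofrac1 tofrac_eq.
apply/eqP => /(congr1 (fun p : {poly rat} => p`_0)).
rewrite coefCM coefXn coef1 /=.
by case: k k0 => // k _; rewrite mulr0 => /eqP; rewrite eq_sym oner_eq0.
Qed.

Lemma num_nz (e : Qq) k : (e = 1 \/ e = -1) -> (0 < k)%N ->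
  (e * Xq) ^+ k - (Xq ^+ k)^-1 != 0.
Proof.
move=> he k0; apply/negP => /eqP h.
have hX : Xq ^+ k != 0 by apply: expf_neq0; exact: Xq_neq0.
have : (e * Xq) ^+ k * Xq ^+ k = 1.
  move/eqP: h; rewrite subr_eq0 => /eqP ->; exact: mulVf hX.
rewrite exprMn -mulrA -exprD.
have k2 : (0 < k + k)%N by rewrite addn_gt0 k0.
case: he => -> h1.
  have := @keyX 1 _ k2; rewrite polyC1 tofrac1 mul1r.
  move: h1; rewrite expr1n mul1r => ->; rewrite eqxx; exact.
have := @keyX ((-1) ^+ k) _ k2.
rewrite polyC_exp tofracXn polyCN polyC1 tofracN tofrac1 h1 eqxx; exact.
Qed.

Lemma q_unit : q \is a GRing.unit.
Proof.
apply: unit_phi; rewrite phiq; exact: Xq_neq0.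
Qed.

Lemma phi_num e k : e ^+ 2 = 1 ->
  phi e ((Pi * q) ^+ k - (q ^+ k)^-1) = (e * Xq) ^+ k - (Xq ^+ k)^-1.
Proof.
move=> he; rewrite (phiB e) (@phiV e he _ (unitrX k q_unit)) !(@phiX e he).
by rewrite (@phiM e he) (phiPi e) (phiq e).
Qed.

Lemma num_unit k : (0 < k)%N -> ((Pi * q) ^+ k - (q ^+ k)^-1) \is a GRing.unit.
Proof.
move=> k0; apply: unit_phi.
  rewrite (@phi_num _ k sq1); apply: num_nz k0; left; reflexivity.
rewrite (@phi_num _ k sqm1); apply: num_nz k0; right; reflexivity.
Qed.

Lemma PiPi : Pi * Pi = 1.
Proof. rewrite qpi_mulE /=. apply: qpi_eq; ring. Qed.

Lemma Pi_unit : Pi \is a GRing.unit.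
Proof. by apply/unitrPr; exists Pi; rewrite PiPi. Qed.

Definition M_def (i j : int) : Qpi := Pi ^ i * q ^ j.
Fact M_key : unit. Proof. exact: tt. Qed.
Definition M := locked_with M_key M_def.
Lemma ME i j : M i j = Pi ^ i * q ^ j. Proof. by rewrite /M unlock. Qed.

Lemma Mmul i j k l : M i j * M k l = M (i + k) (j + l).
Proof. rewrite !ME (exprzDr Pi_unit) (exprzDr q_unit); ring. Qed.

Lemma Meq i i' j j' k : i = i' + 2 * k -> j = j' -> M i j = M i' j'.
Proof.
move=> -> ->; rewrite !ME (exprzDr Pi_unit) -exprz_exp.
have -> : Pi ^ 2 = 1 by rewrite -exprnP expr2 PiPi.
by rewrite exp1rz mulr1.
Qed.

Lemma M_unit i j : M i j \is a GRing.unit.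
Proof. by rewrite !ME unitrM !unitrXz // ?Pi_unit ?q_unit. Qed.

Lemma MA e : (Pi * q ^ (-2)) ^ e = M e (-2 * e).
Proof.
rewrite exprMz_comm ?Pi_unit ?unitrXz ?q_unit //; last exact: mulrC.
by rewrite ME exprz_exp.
Qed.

Lemma MB e : (Pi * q ^+ 2) ^ e = M e (2 * e).
Proof.
rewrite exprnP exprMz_comm ?Pi_unit ?unitrXz ?q_unit //; last exact: mulrC.
by rewrite ME exprz_exp.
Qed.

Lemma MC e : (Pi * q) ^ e = M e e.
Proof.
rewrite ME exprMz_comm ?Pi_unit ?q_unit //; exact: mulrC.
Qed.

Lemma MD e : q ^ e = M 0 e.
Proof. by rewrite !ME expr0z mul1r. Qed.

Lemma M00 : M 0 0 = 1.
Proof. by rewrite !ME !expr0z mul1r. Qed.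

Lemma den_unit : (Pi * q - q^-1) \is a GRing.unit.
Proof. by have := @num_unit 1 isT; rewrite !expr1. Qed.

Lemma qint_unit k : (0 < k)%N -> qint k%:Z \is a GRing.unit.
Proof.
move=> k0; have := @num_unit k k0; rewrite !exprnP invr_expz => h.
by rewrite /qint unitrM unitrV h den_unit.
Qed.

Lemma qfact0 : qfact 0 = 1.
Proof. by rewrite /qfact big_geq. Qed.

Lemma qfactS k : qfact k.+1 = qfact k * qint k.+1%:Z.
Proof. by rewrite /qfact big_nat_recr. Qed.

Lemma qfact_unit k : qfact k \is a GRing.unit.
Proof.
elim: k => [|k IH]; first by rewrite qfact0 unitr1.
by rewrite qfactS unitrM IH qint_unit.
Qed.

Lemma qint_split x j : qint x = M 0 (- j) * qint (x - j) + M (x - j) (x - j) * qint j.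
Proof.
rewrite /qint -MD -MC.
have e1 : (Pi * q) ^ x = (Pi * q) ^ (x - j) * (Pi * q) ^ j.
  by rewrite -exprzDr ?unitrM ?Pi_unit ?q_unit // subrK.
have e2 : q ^ (- x) = q ^ (- j) * q ^ (- (x - j)).
  by rewrite -exprzDr ?q_unit //; congr (_ ^ _); ring.
rewrite e1 e2; ring.
Qed.

Lemma alg_pascal (A B C u ui Q fi : Qpi) : u * ui = 1 ->
  (A * B + C * u) * Q * (ui * fi) = A * (Q * B * (ui * fi)) + C * (Q * fi).
Proof. move=> h; rewrite -[C * (Q * fi)]mulr1 -h; ring. Qed.

Lemma qbinom0 x : qbinom x 0 = 1.
Proof. by rewrite /qbinom /= big_ord0 qfact0 divr1. Qed.

Lemma qbinomN x k : qbinom x (Negz k) = 0.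
Proof. by []. Qed.

Lemma pascal x j : qbinom x j =
  M 0 (- j) * qbinom (x - 1) j + M (x - j) (x - j) * qbinom (x - 1) (j - 1).
Proof.
case: j => [[|k]|k].
- have -> : (0 : int) - 1 = Negz 0 by [].
  by rewrite qbinom0 qbinom0 qbinomN oppr0 M00 subr0 mulr0 addr0 mulr1.
- have -> : (k.+1%:Z - 1) = k%:Z by rewrite intS; ring.
  rewrite /qbinom big_ord_recl big_ord_recr /= qfactS.
  set Q := \prod_(i < k) qint (x - 1 - i%:Z).
  have -> : \prod_(i < k) qint (x - (bump 0 i)%:Z) = Q.
    by apply: eq_bigr => i _; congr qint; rewrite /bump /= add1n intS; ring.
  rewrite subr0 (qint_split x k.+1%:Z).
  have -> : x - 1 - k%:Z = x - k.+1%:Z by rewrite intS; ring.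
  rewrite invrM ?qfact_unit ?qint_unit //.
  apply: alg_pascal; apply: divrr; exact: qint_unit.
- have -> : Negz k - 1 = Negz k.+1 by rewrite !NegzE; lia.
  by rewrite !qbinomN !mulr0 addr0.
Qed.

Fact QB_key : unit. Proof. exact: tt. Qed.
Definition QB := locked_with QB_key qbinom.
Lemma QBE x j : qbinom x j = QB x j. Proof. by rewrite /QB unlock. Qed.

Lemma pascalB x j : QB x j =
  M 0 (- j) * QB (x - 1) j + M (x - j) (x - j) * QB (x - 1) (j - 1).
Proof. by rewrite -!QBE pascal. Qed.

Definition ic (m n : int) (r : nat) : int := sharp (n - r%:Z) r.
Definition jc (m n : int) (r : nat) : int :=
  -2 * sharp (n - r%:Z) r + ((m - n + r%:Z) * n + (n - r%:Z) * r%:Z).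

Lemma c_norm m n r :
  c_mn m n r = M (ic m n r) (jc m n r) * QB (m + r%:Z) n * QB n r%:Z.
Proof.
rewrite /c_mn !QBE MA MD Mmul; congr (_ * _ * _).
by apply: (@Meq _ _ _ _ 0); rewrite /ic /jc; ring.
Qed.

Definition ib (m n : int) (r s : nat) : int :=
  sharp (n - r%:Z) r + (n - r%:Z + m * (r%:Z - s%:Z - 1)).
Definition jb (m n : int) (r s : nat) : int :=
  -2 * sharp (n - r%:Z) r + (2 * (n - r%:Z + m * (r%:Z - s%:Z - 1)) +
   ((m - n + r%:Z - 1) * (n - r%:Z + s%:Z + 1) + (n - r%:Z) * s%:Z)).

Lemma ass3 (A B C B1 B2 : Qpi) : A * (B * C * B1 * B2) = A * B * C * B1 * B2.
Proof. ring. Qed.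

Lemma b_norm m n r : b_mn m n r = \sum_(s < r)
  M (ib m n r s) (jb m n r s) * QB (m + s%:Z) (n - r%:Z + s%:Z + 1) *
   QB (n - r%:Z + s%:Z) s%:Z.
Proof.
rewrite /b_mn mulr_sumr; apply: eq_bigr => s _.
rewrite !QBE ass3 MA MB MD Mmul Mmul; congr (_ * _ * _).
by apply: (@Meq _ _ _ _ 0); rewrite /ib /jb; ring.
Qed.

Lemma b_rec m n r : b_mn m n r.+1 =
  M (ib m n r.+1 r) (jb m n r.+1 r) * QB (m + r%:Z) n * QB (n - 1) r%:Z
  + M (n - 1 + m) (2 * m - 2 * (n - 1)) * b_mn m (n - 1) r.
Proof.
have hr : r.+1%:Z = r%:Z + 1 by rewrite intS addrC.
rewrite b_norm big_ord_recr /= addrC (b_norm m (n-1) r) mulr_sumr; congr (_ + _).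
  have -> : n - r.+1%:Z + r%:Z + 1 = n by rewrite hr; ring.
  have -> : n - r.+1%:Z + r%:Z = n - 1 by rewrite hr; ring.
  reflexivity.
apply: eq_bigr => s _.
rewrite !mulrA Mmul (_ : n - r.+1%:Z = n - 1 - r%:Z); last by rewrite hr; ring.
congr (_ * _ * _).
apply: (@Meq _ _ _ _ 0); rewrite /ib /jb /sharp binS bin1 PoszD hr; ring.
Qed.

Lemma QB0 x : QB x 0 = 1.
Proof. by rewrite -QBE qbinom0. Qed.

Lemma b0 m n : b_mn m n 0 = 0.
Proof. by rewrite /b_mn big_ord0 mulr0. Qed.

Lemma part1 m r n : c_mn m n r = b_mn m n r + b_mn m n r.+1.
Proof.
elim: r n => [|r IH] n.
  rewrite b0 add0r b_rec b0 mulr0 addr0 c_norm !QB0 !mulr1.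
  congr (_ * _); apply: (@Meq _ _ _ _ (1 - n)); rewrite /ic /jc /ib /jb /sharp ?bin0 ?bin1; ring.
have hr : r.+1%:Z = r%:Z + 1 by rewrite intS addrC.
have hr2 : r.+2%:Z = r%:Z + 2 by rewrite intS hr; ring.
rewrite (b_rec m n r) (b_rec m n r.+1) addrACA -mulrDr -IH (c_norm m (n-1) r) c_norm.
rewrite !mulrA Mmul (pascalB n r.+1) (pascalB (m + r.+1%:Z) n).
rewrite (_ : r.+1%:Z - 1 = r%:Z); last by rewrite hr; ring.
rewrite (_ : m + r.+1%:Z - 1 = m + r%:Z); last by rewrite hr; ring.
have R1 : M (ib m n r.+2 r.+1) (jb m n r.+2 r.+1) =
    M (ic m n r.+1) (jc m n r.+1) * M 0 (- r.+1%:Z).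
  rewrite Mmul; apply: (@Meq _ _ _ _ (n - r%:Z - 2));
  rewrite /ic /jc /ib /jb /sharp !binS !bin1 ?bin0 !PoszD ?hr2 ?hr; ring.
have R2 : M (ib m n r.+1 r) (jb m n r.+1 r) =
    M (ic m n r.+1) (jc m n r.+1) * M (n - r.+1%:Z) (n - r.+1%:Z) * M 0 (- n).
  rewrite !Mmul; apply: (@Meq _ _ _ _ 0);
  rewrite /ic /jc /ib /jb /sharp !binS !bin1 ?bin0 !PoszD ?hr2 ?hr; ring.
have R3 : M (n - 1 + m + ic m (n - 1) r) (2 * m - 2 * (n - 1) + jc m (n - 1) r) =
    M (ic m n r.+1) (jc m n r.+1) * M (n - r.+1%:Z) (n - r.+1%:Z) *
    M (m + r.+1%:Z - n) (m + r.+1%:Z - n).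
  rewrite !Mmul; apply: (@Meq _ _ _ _ 0);
  rewrite /ic /jc /ib /jb /sharp !binS !bin1 ?bin0 !PoszD ?hr2 ?hr; ring.
rewrite R1 R2 R3; ring.
Qed.

Lemma qint0 : qint 0 = 0.
Proof. by rewrite /qint oppr0 !expr0z subrr mul0r. Qed.

Lemma QB_diag k : 0 <= k -> QB k k = 1.
Proof.
case: k => // kk _; rewrite -QBE /qbinom.
have -> : \prod_(i < kk) qint (kk%:Z - i%:Z) = qfact kk.
  rewrite /qfact big_add1 /= big_mkord (reindex_inj rev_ord_inj) /=.
  apply: eq_bigr => i _; congr qint; have := ltn_ord i; lia.
by rewrite divrr // qfact_unit.
Qed.

Lemma QB_over k : 0 <= k -> QB k (k + 1) = 0.
Proof.
case: k => // kk _; rewrite -QBE (_ : kk%:Z + 1 = kk.+1%:Z); last by rewrite intS addrC.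
by rewrite /qbinom big_ord_recr /= subrr qint0 mulr0 mul0r.
Qed.

Lemma part2 (n : int) (r : nat) : r%:Z <= n ->
     q ^ ((n - r%:Z) * r%:Z) * qbinom n r%:Z =
     \sum_(s < r.+1)
       (Pi * q ^+ 2) ^ ((n - r%:Z) * (r%:Z - s%:Z)) *
       q ^ ((n - r%:Z - 1) * s%:Z) *
       qbinom (n - r%:Z + s%:Z - 1) s%:Z.
Proof.
move=> rn.
have hr : r.+1%:Z = r%:Z + 1 by rewrite intS addrC.
have P := part1 (n - r%:Z) r n.
have B0 : b_mn (n - r%:Z) n r = 0.
  rewrite b_norm big1 // => s _.
  by rewrite QB_over ?mulr0 ?mul0r //; lia.
move: P; rewrite B0 add0r c_norm subrK QB_diag; last by lia.
rewrite mulr1 b_norm => P.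
apply: (mulrI (M_unit (sharp (n - r%:Z) r) (-2 * sharp (n - r%:Z) r))).
rewrite QBE MD mulrA Mmul.
rewrite (_ : M _ _ = M (ic (n - r%:Z) n r) (jc (n - r%:Z) n r)); last first.
  apply: (@Meq _ _ _ _ 0); rewrite /ic /jc; ring.
rewrite P mulr_sumr; apply: eq_bigr => s _.
rewrite QBE MB MD !mulrA !Mmul.
rewrite (_ : n - r.+1%:Z + s%:Z + 1 = n - r%:Z + s%:Z); last by rewrite hr; ring.
rewrite (_ : n - r.+1%:Z + s%:Z = n - r%:Z + s%:Z - 1); last by rewrite hr; ring.
rewrite QB_diag; last by have := ltn_ord s; lia.
rewrite mulr1; congr (_ * _).
apply: (@Meq _ _ _ _ (n - r%:Z - 1));
  rewrite /ib /jb /sharp !binS !bin1 ?bin0 !PoszD ?hr; ring.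
Qed.

Theorem mainTheorem3 :
  (forall (m n : int) (r : nat), c_mn m n r = b_mn m n r + b_mn m n r.+1) /\
  (forall (n : int) (r : nat), r%:Z <= n ->
     q ^ ((n - r%:Z) * r%:Z) * qbinom n r%:Z =
     \sum_(s < r.+1)
       (Pi * q ^+ 2) ^ ((n - r%:Z) * (r%:Z - s%:Z)) *
       q ^ ((n - r%:Z - 1) * s%:Z) *
       qbinom (n - r%:Z + s%:Z - 1) s%:Z).
Proof.
split; [move=> m n r; exact: part1 | exact: part2].
Qed.
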